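(* Let $pu$, $uv$, and $vq$ be three edges of a Euclidean minimum spanning tree of a finite point set in the plane such that $p$ and $q$ lie on the same side of the line through $u$ and $v$. Let $\alpha=\angle puv$ and $\gamma=\angle uvq$ denote the convex angles at $u$ and $v$, respectively. Then $\alpha+\gamma\geqslant 150^\circ$.
   Context: Angles are measured in degrees. *)

(* Defs.v *)
From HB Require Import structures.
From mathcomp Require Import all_boot all_order all_algebra.
From mathcomp Require Import all_classical all_reals all_analysis.
Set Implicit Arguments. Unset Strict Implicit. Unset Printing Implicit Defensive.
Import Order.TTheory GRing.Theory Num.Theory.
Local Open Scope ring_scope.

Section Geo.
Variable R : realType.
Definition pt := (R * R)%type.

Definition dot (a b : pt) : R := a.1 * b.1 + a.2 * b.2.
Definition vsub (a b : pt) : pt := (a.1 - b.1, a.2 - b.2).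
Definition dist (a b : pt) : R := Num.sqrt (dot (vsub a b) (vsub a b)).
Definition angle_rad (a b c : pt) : R :=
  acos (dot (vsub a b) (vsub c b) / (dist a b * dist c b)).
Definition angle_deg (a b c : pt) : R := angle_rad a b c * 180 / pi.
Definition cross (a b c : pt) : R :=
  (b.1 - a.1) * (c.2 - a.2) - (b.2 - a.2) * (c.1 - a.1).
Definition same_side (u v p q : pt) : Prop := 0 < cross u v p * cross u v q.
End Geo.

Section Graph.
Variable n : nat.
Definition simple_graph (T : rel 'I_n) : Prop :=
  (forall i j, T i j = T j i) /\ (forall i, ~~ T i i).
Definition remove_edge (T : rel 'I_n) (a b : 'I_n) : rel 'I_n :=
  fun x y => T x y && ~~ (((x == a) && (y == b)) || ((x == b) && (y == a))).
Definition connected_graph (T : rel 'I_n) : Prop := forall i j, connect T i j.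
(* acyclic: every edge is a bridge (no cycle contains it) *)
Definition acyclic (T : rel 'I_n) : Prop :=
  forall a b, T a b -> ~~ connect (remove_edge T a b) a b.
Definition spanning_tree (T : rel 'I_n) : Prop :=
  [/\ simple_graph T, connected_graph T & acyclic T].
End Graph.

Definition tree_length (R : realType) (n : nat) (P : 'I_n -> pt R)
  (T : rel 'I_n) : R :=
  \sum_(i : 'I_n) \sum_(j : 'I_n | (i < j)%N && T i j) dist (P i) (P j).

Definition EMST (R : realType) (n : nat) (P : 'I_n -> pt R) (T : rel 'I_n) : Prop :=
  spanning_tree T /\
  forall T' : rel 'I_n, spanning_tree T' -> tree_length P T <= tree_length P T'.

(* Main.v *)
Require Import Defs.
From HB Require Import structures.
From mathcomp Require Import all_boot all_order all_algebra.
From mathcomp Require Import all_classical all_reals all_analysis.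
From mathcomp Require Import ring lra.
Set Implicit Arguments. Unset Strict Implicit.
Import Order.TTheory GRing.Theory Num.Theory.
Local Open Scope ring_scope.

Lemma tgt2 (R : realFieldType) (C SC c : R) : 0 <= C -> C <= 1/2 -> 0 <= SC -> SC^+2 = 1 - C^+2 ->
  0 < c -> 4 * c^+2 = 3 ->
  - (2*C^+2 - 1)/2 - c*(2*C*SC) <= - c*C + SC/2.
Proof.
move=> C0 C1 S0 SE c0 cE.
have h0 : 0 <= SC * c * C by rewrite -mulrA; apply: mulr_ge0 => //; apply: mulr_ge0 => //; exact: ltW.
have h0' : 0 <= c * C by apply: mulr_ge0 => //; exact: ltW.
have P : 0 <= SC * (1 + 4*c*C) + (1 - 2*C^+2 + 2*c*C) by nra.
have D : (SC * (1 + 4*c*C))^+2 - (1 - 2*C^+2 + 2*c*C)^+2 = 4*c*C + 12*C^+2 - 16*C^+4 + (4 * c^+2 - 3) * (3 * C^+2 - 4 * C^+4).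
  by rewrite exprMn SE; ring.
rewrite cE subrr mul0r addr0 in D.
have C2 : C^+2 <= 1/4 by nra.
have C4 : C^+4 = C^+2 * C^+2 by ring.
have C2' : 0 <= C^+2 by apply: sqr_ge0.
have D2 : 0 <= 4*c*C + 12*C^+2 - 16*C^+4 by rewrite C4; nra.
have K : 1 - 2*C^+2 + 2*c*C <= SC * (1 + 4*c*C).
  have : 0 <= (SC * (1 + 4*c*C) - (1 - 2*C^+2 + 2*c*C)) * (SC * (1 + 4*c*C) + (1 - 2*C^+2 + 2*c*C)).
    have -> : (SC * (1 + 4*c*C) - (1 - 2*C^+2 + 2*c*C)) * (SC * (1 + 4*c*C) + (1 - 2*C^+2 + 2*c*C)) = (SC * (1 + 4*c*C))^+2 - (1 - 2*C^+2 + 2*c*C)^+2 by ring.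
    by rewrite D.
  nra.
nra.
Qed.

Lemma z2neg (R : realFieldType) (A C SA SC c : R) : 0 < A -> A <= 1/2 -> 0 < C -> C <= 1/2 -> 0 <= SA -> 0 <= SC -> SA^+2 = 1 - A^+2 -> SC^+2 = 1 - C^+2 -> 0 < c -> 4 * c^+2 = 3 ->
  SA * (2*C^+2 - 1) + A * (2*C*SC) <= 0.
Proof.
move=> A0 A1 C0 C1 SA0 SC0 SAE SCE c0 cE.
have h1 : c <= SA by nra.
have C2 : C^+2 <= 1/4 by nra.
have hh : 0 <= (1/4 - C^+2) * (3/4 - C^+2) by apply: mulr_ge0; lra.
have h2 : (2*C*SC)^+2 <= c^+2 by rewrite exprMn SCE; nra.
have h3 : 2*C*SC <= c by nra.
nra.
Qed.
Lemma tgt1 (R : realFieldType) (z1 z2 K L c : R) : -1/2 <= z1 -> z2 <= 0 -> z1^+2 + z2^+2 = 1 ->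
  K <= -1/2 -> 0 <= L -> L <= -2*c*K -> 0 < c -> 4 * c^+2 = 3 ->
  z1 * K + z2 * L <= - K / 2 - c * L.
Proof.
move=> z1l z2n zE Kn L0 LK c0 cE.
suff : (z1 + 1/2) * K + (z2 + c) * L <= 0 by move=> h; lra.
case: (lerP (z2 + c) 0) => hz.
  have : (z1 + 1/2) * K <= 0 by rewrite mulr_ge0_le0 //; lra.
  have : (z2 + c) * L <= 0 by rewrite mulr_le0_ge0.
  lra.
have m0 : 0 <= - z2 by lra.
have mc : - z2 <= c by lra.
have key : 1 <= z1 - 2 * c * z2.
  case: (lerP (1 + 2 * c * z2) 0) => h1.
    have : 1/4 <= z1^+2.
      have : z2^+2 <= 3/4.
        have : z2^+2 <= c^+2 by nra.
        lra.
      lra.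
    move=> hz1. have : 1/2 <= z1 by nra.
    lra.
  have hq : (1 + 2 * c * z2)^+2 <= z1^+2.
    have -> : z1^+2 = 1 - z2^+2 by lra.
    have -> : (1 + 2 * c * z2)^+2 = 1 + 4 * c * z2 + (4 * c^+2) * z2^+2 by ring.
    rewrite cE. nra.
  have : 0 <= z1.
    have : 1/4 <= z1^+2.
      have : z2^+2 <= 3/4.
        have : z2^+2 <= c^+2 by nra.
        lra.
      lra.
    move=> hz1. nra.
  nra.
have : (z2 + c) * L <= (z2 + c) * (-2 * c * K) by rewrite ler_pM2l.
have : (z1 + 1/2) * K + (z2 + c) * (-2 * c * K) = K * (z1 - 2 * c * z2 - 1) - K * (4 * c^+2 - 3) / 2 by field.
rewrite cE subrr mulr0 mul0r subr0 => E.
have : K * (z1 - 2 * c * z2 - 1) <= 0 by rewrite mulr_le0_ge0 //; lra.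
lra.
Qed.

Lemma Lfin (R : realFieldType) (A C SA SC c : R) : 0 < A -> A <= 1/2 -> 0 < C -> C <= 1/2 ->
  0 <= SA -> 0 <= SC -> SA^+2 = 1 - A^+2 -> SC^+2 = 1 - C^+2 -> 0 < c -> 4*c^+2 = 3 ->
  4*C*(SA*SC - A*C) + 2*A <= 1 -> A <= - c*C + SC/2.
Proof.
move=> A0 A1 C0 C1 SA0 SC0 SAE SCE c0 cE H.
pose K := 2*C^+2 - 1. pose L := 2*C*SC.
pose z1 := A*K - SA*L. pose z2 := SA*K + A*L.
have z1l : -1/2 <= z1.
  have : 4*C*(SA*SC - A*C) + 2*A = -2 * z1 by rewrite /z1 /K /L; ring.
  lra.
have z2n : z2 <= 0 by rewrite /z2 /K /L; exact: (z2neg A0 A1 C0 C1 SA0 SC0 SAE SCE c0 cE).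
have KL : K^+2 + L^+2 = 1.
  have -> : K^+2 + L^+2 = (2*C^+2 - 1)^+2 + 4 * C^+2 * SC^+2 by rewrite /K /L; ring.
  rewrite SCE; ring.
have zE : z1^+2 + z2^+2 = 1.
  have -> : z1^+2 + z2^+2 = (A^+2 + SA^+2) * (K^+2 + L^+2) by rewrite /z1 /z2; ring.
  by rewrite KL SAE mulr1 addrC subrK.
have Aeq : A = z1 * K + z2 * L.
  have -> : z1 * K + z2 * L = A * (K^+2 + L^+2) by rewrite /z1 /z2; ring.
  by rewrite KL mulr1.
have C2 : C^+2 <= 1/4 by nra.
have Kn : K <= -1/2 by rewrite /K; lra.
have L0 : 0 <= L by rewrite /L; apply: mulr_ge0 => //; apply: mulr_ge0 => //; lra.
have LK : L <= -2*c*K.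
  have hh : 0 <= (1 - 4 * C^+2) * (3 - 4 * C^+2) by apply: mulr_ge0; lra.
  have e1 : (-2*c*K)^+2 - L^+2 = (1 - 4 * C^+2) * (3 - 4 * C^+2) + (4 * c^+2 - 3) * K^+2.
    have -> : L^+2 = 4 * C^+2 * SC^+2 by rewrite /L; ring.
    rewrite SCE /K; ring.
  rewrite cE subrr mul0r addr0 in e1.
  have p : 0 <= -2*c*K by nra.
  nra.
have T1 := tgt1 z1l z2n zE Kn L0 LK c0 cE.
have T2 := tgt2 (ltW C0) C1 SC0 SCE c0 cE.
rewrite Aeq. apply: le_trans T1 _. exact: T2.
Qed.
Lemma Lcore (R : realFieldType) (d r s A C cw : R) : 0 < d -> 0 < r -> 0 < s -> s <= r -> 0 < C -> 1/2 <= cw ->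
  2*r*s*cw <= d^+2 + s^+2 - 2*s*d*C - 2*r*d*A ->
  2*r*s*cw <= r^+2 + s^+2 - 2*s*d*C - 2*r*d*A ->
  0 <= s^+2 - 2*s*d*C ->
  4*C*cw + 2*A <= 1.
Proof.
move=> d0 r0 s0 sr C0 cw1 H5 H6 H3.
have m : 2*r*s*cw <= r*d + s^+2 - 2*s*d*C - 2*r*d*A.
  case: (lerP r d) => h.
    have : 0 <= r * (d - r) by apply: mulr_ge0; lra.
    nra.
  have : 0 <= d * (r - d) by apply: mulr_ge0; lra.
  nra.
have s2 : 0 <= s - 2*d*C.
  have e : s * (s - 2*d*C) = s^+2 - 2*s*d*C by ring.
  have : 0 <= s * (s - 2*d*C) by rewrite e.
  by rewrite pmulr_rge0.
have m2 : 0 <= (s - 2*d*C) * (r - s) by apply: mulr_ge0; lra.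
have m3 : 2*r*s*cw <= r * (d + s - 2*d*C - 2*d*A) by nra.
have m4 : 2*s*cw <= d + s - 2*d*C - 2*d*A.
  have e : 2*r*s*cw = r * (2*s*cw) by ring.
  by rewrite e ler_pM2l in m3.
have m5 : 0 <= (2*cw - 1) * (s - 2*d*C) by apply: mulr_ge0; lra.
have m6 : d * (4*C*cw + 2*A) <= d * 1 by nra.
by rewrite ler_pM2l in m6.
Qed.
Section Trig.
Variable R : realType.

Lemma acos_anti (x y : R) : -1 <= x -> x <= y -> y <= 1 -> acos y <= acos x.
Proof.
move=> x1 xy y1.
have hx : -1 <= x <= 1 by apply/andP; split => //; lra.
have hy : -1 <= y <= 1 by apply/andP; split => //; lra.
rewrite leNgt; apply/negP => h.
have : cos (acos y) < cos (acos x).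
  by rewrite ltr_cos // ?in_itv /= ?acos_ge0 ?acos_lepi.
rewrite !acosK ?in_itv //= => h'. lra.
Qed.

Lemma le_acos (A t : R) : -1 <= A -> A <= 1 -> 0 <= t -> t <= pi -> A <= cos t -> t <= acos A.
Proof.
move=> A1 A2 t0 t1 h.
have -> : t = acos (cos t) by rewrite cosK // in_itv /= t0.
by apply: acos_anti.
Qed.

Lemma sin6_alg (s c : R) : 0 < s -> c ^+ 2 = 1 - s ^+ 2 ->
  1 = s * (c ^+ 2 *+ 2 - 1) + c * ((c * s) *+ 2) -> s = 1 / 2.
Proof.
move=> s0 cs h1.
have h2 : 0 = (s + 1) * (2 * s - 1) ^+ 2.
  have E : s * (c ^+ 2 *+ 2 - 1) + c * ((c * s) *+ 2) = 3 * s - 4 * s ^+ 3.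
    rewrite !mulr2n. have -> : c * (c * s + c * s) = 2 * c^+2 * s by ring.
    rewrite cs. ring.
  rewrite E in h1.
  have -> : (s + 1) * (2 * s - 1) ^+ 2 = 4 * s^+3 - 3 * s + 1 by ring.
  lra.
have : (2 * s - 1) ^+ 2 = 0.
  apply/eqP; move/eqP: h2; rewrite eq_sym mulf_eq0 => /orP [] /eqP h //.
  exfalso; lra.
move/eqP; rewrite sqrf_eq0 => /eqP. lra.
Qed.

Lemma pi6_facts : 0 < cos (pi / 6 : R) /\ 4 * cos (pi / 6 : R) ^+ 2 = 3 /\ sin (pi / 6 : R) = 1 / 2.
Proof.
have p0 := @pi_gt0 R.
have r1 : 0 < (pi / 6 : R) < pi / 2 by apply/andP; split; lra.
have c0 : 0 < cos (pi / 6 : R).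
  apply: cos_gt0_pihalf; apply/andP; split; lra.
have s0 : 0 < sin (pi / 6 : R) by apply: sin_gt0_pihalf.
have cs : cos (pi / 6 : R) ^+ 2 = 1 - sin (pi / 6 : R) ^+ 2 by rewrite cos2sin2.
have e3 : (pi / 2 : R) = pi / 6 + (pi / 6) *+ 2 by rewrite mulr2n; field.
have h1 : sin (pi / 2 : R) = sin (pi / 6) * (cos (pi / 6) ^+ 2 *+ 2 - 1) + cos (pi / 6) * ((cos (pi / 6) * sin (pi / 6)) *+ 2).
  by rewrite e3 sinD cos_mulr2n sin_mulr2n.
rewrite sin_pihalf in h1.
have sh := sin6_alg s0 cs h1.
split => //; split => //.
rewrite cs sh. lra.
Qed.

Lemma cos_pi3 : cos (pi / 3 : R) = 1 / 2.
Proof.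
have [_ [_ s6]] := pi6_facts.
have -> : (pi / 3 : R) = pi / 2 - pi / 6 by field.
by rewrite cosB cos_pihalf sin_pihalf mul0r add0r mul1r s6.
Qed.

Lemma acos_ge_pi3 (A : R) : -1 <= A -> A <= 1 / 2 -> pi / 3 <= acos A.
Proof.
move=> A1 A2. have p0 := @pi_gt0 R.
apply: le_acos => //; try lra.
by rewrite cos_pi3.
Qed.

Lemma acos_ge_pi2 (A : R) : -1 <= A -> A <= 0 -> pi / 2 <= acos A.
Proof.
move=> A1 A2. have p0 := @pi_gt0 R.
apply: le_acos => //; try lra.
by rewrite cos_pihalf.
Qed.

Lemma acos_main (A C : R) : -1 <= A -> A <= 1 -> 0 <= C -> C <= 1 / 2 ->
  A <= - cos (pi / 6) * C + Num.sqrt (1 - C ^+ 2) / 2 ->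
  5 * pi / 6 <= acos A + acos C.
Proof.
move=> A1 A2 C1 C2 h.
have p0 := @pi_gt0 R.
have [c0 [cE s6]] := pi6_facts.
have hC : -1 <= C <= 1 by apply/andP; split; lra.
have y1 : acos C <= pi / 2.
  rewrite -[X in _ <= X / 2]mulr1 -[X in _ <= X]mulrA mul1r.
  have -> : (pi / 2 : R) = acos 0 by rewrite acos0.
  by apply: acos_anti => //; lra.
have y0 : pi / 3 <= acos C by apply: acos_ge_pi3; lra.
have ct : cos (5 * pi / 6 - acos C) = - cos (pi / 6) * C + Num.sqrt (1 - C ^+ 2) / 2.
  have -> : 5 * pi / 6 - acos C = - (pi / 6 + acos C) + pi by field.
  rewrite cosDpi cosN cosD acosK ?in_itv // sin_acos // s6.
  by field.
have : 5 * pi / 6 - acos C <= acos A.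
  have t0 : 0 <= 5 * pi / 6 - acos C by lra.
  have t1 : 5 * pi / 6 - acos C <= pi by lra.
  apply: (le_acos A1 A2 t0 t1).
  by rewrite ct.
lra.
Qed.

End Trig.

Section Vec.
Variable R : realType.

Lemma sqrt_facts (x : R) : 0 < x -> 0 < Num.sqrt x /\ Num.sqrt x ^+ 2 = x.
Proof. move=> x0; split; first by rewrite sqrtr_gt0. by rewrite sqr_sqrtr // ltW. Qed.

Lemma Labs (dd rr ss ea eb ca cb M : R) :
  0 <= dd -> 0 <= rr -> 0 <= ss ->
  ea ^+ 2 + ca ^+ 2 = rr * dd ->
  eb ^+ 2 + cb ^+ 2 = ss * dd ->
  M * dd = ea * eb + ca * cb ->
  rr <= rr + dd - 2 * ea ->
  dd <= rr + dd - 2 * ea ->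
  dd <= ss + dd + 2 * eb ->
  ss <= ss + dd + 2 * eb ->
  dd <= dd + rr + ss + 2 * eb - 2 * ea - 2 * M ->
  rr <= dd + rr + ss + 2 * eb - 2 * ea - 2 * M ->
  0 < ca * cb ->
  ss <= rr ->
  5 * pi / 6 <= acos (ea / (Num.sqrt rr * Num.sqrt dd)) + acos (- eb / (Num.sqrt ss * Num.sqrt dd)).
Proof.
move=> dd0 rr0 ss0 Lag1 Lag2 Lag3 h1 h2 h3 h4 h5 h6 hs hrs.
have p0 := @pi_gt0 R.
have ca0 : ca != 0 by apply/eqP => h; move: hs; rewrite h mul0r ltxx.
have cb0 : cb != 0 by apply/eqP => h; move: hs; rewrite h mulr0 ltxx.
have ca2 : 0 < ca ^+ 2 by rewrite exprn_even_gt0.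
have cb2 : 0 < cb ^+ 2 by rewrite exprn_even_gt0.
have ea2 : 0 <= ea ^+ 2 by apply: sqr_ge0.
have eb2 : 0 <= eb ^+ 2 by apply: sqr_ge0.
have rd : 0 < rr * dd by lra.
have sd : 0 < ss * dd by lra.
have dpos : 0 < dd.
  rewrite lt0r dd0 andbT; apply/eqP => h; move: rd; rewrite h mulr0 ltxx. by [].
have rpos : 0 < rr.
  rewrite lt0r rr0 andbT; apply/eqP => h; move: rd; rewrite h mul0r ltxx. by [].
have spos : 0 < ss.
  rewrite lt0r ss0 andbT; apply/eqP => h; move: sd; rewrite h mul0r ltxx. by [].
have [d0 dE] := sqrt_facts dpos.
have [r0 rE] := sqrt_facts rpos.
have [s0 sE] := sqrt_facts spos.
have sr : Num.sqrt ss <= Num.sqrt rr by rewrite ler_sqrt.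
move: d0 dE r0 rE s0 sE sr.
move: (Num.sqrt dd) (Num.sqrt rr) (Num.sqrt ss) => d r s d0 dE r0 rE s0 sE sr.
rewrite -dE -rE -sE in Lag1 Lag2 Lag3 h1 h2 h3 h4 h5 h6.
have rd0 : 0 < r * d by apply: mulr_gt0.
have sd0 : 0 < s * d by apply: mulr_gt0.
have rdn : r * d != 0 by rewrite gt_eqF.
have sdn : s * d != 0 by rewrite gt_eqF.
set A := ea / (r * d). set C := - eb / (s * d).
have eaE : ea = A * (r * d) by rewrite /A divfK.
have ebE : eb = - (C * (s * d)) by rewrite /C divfK // opprK.
pose SA := `|ca| / (r * d). pose SC := `|cb| / (s * d).
have SA0 : 0 <= SA by rewrite /SA divr_ge0 // ltW.
have SC0 : 0 <= SC by rewrite /SC divr_ge0 // ltW.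
have caE : `|ca| = SA * (r * d) by rewrite /SA divfK.
have cbE : `|cb| = SC * (s * d) by rewrite /SC divfK.
have SAE : SA ^+ 2 = 1 - A ^+ 2.
  have : (A ^+ 2 + SA ^+ 2) * (r * d) ^+ 2 = 1 * (r * d) ^+ 2.
    rewrite mulrDl -!exprMn -eaE -caE real_normK ?num_real // Lag1. ring.
  move/(mulIf (expf_neq0 2 rdn)). lra.
have SCE : SC ^+ 2 = 1 - C ^+ 2.
  have : (C ^+ 2 + SC ^+ 2) * (s * d) ^+ 2 = 1 * (s * d) ^+ 2.
    rewrite mulrDl -!exprMn -cbE real_normK ?num_real //.
    have -> : (C * (s * d)) ^+ 2 = eb ^+ 2 by rewrite ebE sqrrN.
    rewrite Lag2. ring.
  move/(mulIf (expf_neq0 2 sdn)). lra.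
have cacb : ca * cb = SA * (r * d) * (SC * (s * d)).
  by rewrite -caE -cbE -normrM gtr0_norm.
have ME : M = r * s * (SA * SC - A * C).
  have : M * d ^+ 2 = (r * s * (SA * SC - A * C)) * d ^+ 2.
    rewrite Lag3 cacb eaE ebE. ring.
  by move/(mulIf (expf_neq0 2 (negbT (gt_eqF d0)))).
have A1 : A <= 1 / 2.
  have : 2 * ea <= r * d.
    case: (lerP r d) => h.
      have : r ^+ 2 <= r * d by rewrite expr2 ler_pM2l.
      lra.
    have : d ^+ 2 <= r * d by rewrite expr2 ler_pM2r // ltW.
    lra.
  rewrite eaE => h. have : A * 2 * (r * d) <= (1/2) * 2 * (r * d) by lra.
  by rewrite ler_pM2r // ler_pM2r.
have C1 : C <= 1 / 2.
  have : - 2 * eb <= s * d.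
    case: (lerP s d) => h.
      have : s ^+ 2 <= s * d by rewrite expr2 ler_pM2l.
      lra.
    have : d ^+ 2 <= s * d by rewrite expr2 ler_pM2r // ltW.
    lra.
  rewrite ebE => h. have : C * 2 * (s * d) <= (1/2) * 2 * (s * d) by lra.
  by rewrite ler_pM2r // ler_pM2r.
have An : -1 <= A.
  have : A ^+ 2 <= 1 by have := sqr_ge0 SA; lra.
  nra.
have Cn : -1 <= C.
  have : C ^+ 2 <= 1 by have := sqr_ge0 SC; lra.
  nra.
case: (lerP C 0) => Cs.
  have := acos_ge_pi3 An A1. have := acos_ge_pi2 Cn Cs. lra.
case: (lerP A 0) => As.
  have := acos_ge_pi2 An As. have := acos_ge_pi3 Cn C1. lra.
have [c0 [cE _]] := pi6_facts R.
have cw : 1 / 2 <= SA * SC - A * C.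
  have a3 : 3/4 <= SA ^+ 2 by nra.
  have c3 : 3/4 <= SC ^+ 2 by nra.
  have : 9/16 <= (SA * SC) ^+ 2 by rewrite exprMn; nra.
  move=> h. have : 3/4 <= SA * SC.
    have : 0 <= SA * SC by apply: mulr_ge0.
    nra.
  nra.
have core : 4 * C * (SA * SC - A * C) + 2 * A <= 1.
  apply: (Lcore d0 r0 s0 sr Cs cw).
  - rewrite ME eaE ebE in h6. lra.
  - rewrite ME eaE ebE in h5. lra.
  - rewrite ebE in h3. lra.
have fin := Lfin As A1 Cs C1 SA0 SC0 SAE SCE c0 cE core.
have SCsq : Num.sqrt (1 - C ^+ 2) = SC by rewrite -SCE sqrtr_sqr ger0_norm.
apply: acos_main => //; first lra.
  exact: ltW.
by rewrite SCsq.
Qed.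

Lemma Lvec (e1 e2 a1 a2 b1 b2 : R) :
  a1*a1 + a2*a2 <= (a1-e1)*(a1-e1) + (a2-e2)*(a2-e2) ->
  e1*e1 + e2*e2 <= (a1-e1)*(a1-e1) + (a2-e2)*(a2-e2) ->
  e1*e1 + e2*e2 <= (b1+e1)*(b1+e1) + (b2+e2)*(b2+e2) ->
  b1*b1 + b2*b2 <= (b1+e1)*(b1+e1) + (b2+e2)*(b2+e2) ->
  e1*e1 + e2*e2 <= (e1+b1-a1)*(e1+b1-a1) + (e2+b2-a2)*(e2+b2-a2) ->
  a1*a1 + a2*a2 <= (e1+b1-a1)*(e1+b1-a1) + (e2+b2-a2)*(e2+b2-a2) ->
  b1*b1 + b2*b2 <= (e1+b1-a1)*(e1+b1-a1) + (e2+b2-a2)*(e2+b2-a2) ->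
  0 < (e1*a2 - e2*a1) * (e1*b2 - e2*b1) ->
  5 * pi / 6 <= acos ((a1*e1 + a2*e2) / (Num.sqrt (a1*a1 + a2*a2) * Num.sqrt (e1*e1 + e2*e2)))
              + acos (- (b1*e1 + b2*e2) / (Num.sqrt (b1*b1 + b2*b2) * Num.sqrt (e1*e1 + e2*e2))).
Proof.
move=> h1 h2 h3 h4 h5 h6 h7 hs.
have Lag1 : (a1*e1 + a2*e2)^+2 + (e1*a2 - e2*a1)^+2 = (a1*a1 + a2*a2) * (e1*e1 + e2*e2) by ring.
have Lag2 : (b1*e1 + b2*e2)^+2 + (e1*b2 - e2*b1)^+2 = (b1*b1 + b2*b2) * (e1*e1 + e2*e2) by ring.
have Lag3 : (a1*b1 + a2*b2) * (e1*e1 + e2*e2) = (a1*e1 + a2*e2) * (b1*e1 + b2*e2) + (e1*a2 - e2*a1) * (e1*b2 - e2*b1) by ring.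
have hW : (e1+b1-a1)*(e1+b1-a1) + (e2+b2-a2)*(e2+b2-a2) =
  (e1*e1 + e2*e2) + (a1*a1 + a2*a2) + (b1*b1 + b2*b2) + 2 * (b1*e1 + b2*e2) - 2 * (a1*e1 + a2*e2) - 2 * (a1*b1 + a2*b2) by ring.
have hA : (a1-e1)*(a1-e1) + (a2-e2)*(a2-e2) = (a1*a1 + a2*a2) + (e1*e1 + e2*e2) - 2 * (a1*e1 + a2*e2) by ring.
have hB : (b1+e1)*(b1+e1) + (b2+e2)*(b2+e2) = (b1*b1 + b2*b2) + (e1*e1 + e2*e2) + 2 * (b1*e1 + b2*e2) by ring.
have dd0 : 0 <= e1*e1 + e2*e2 by rewrite addr_ge0 // -expr2 sqr_ge0.
have rr0 : 0 <= a1*a1 + a2*a2 by rewrite addr_ge0 // -expr2 sqr_ge0.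
have ss0 : 0 <= b1*b1 + b2*b2 by rewrite addr_ge0 // -expr2 sqr_ge0.
rewrite hW in h5 h6 h7. rewrite hA in h1 h2. rewrite hB in h3 h4.
move: dd0 rr0 ss0 Lag1 Lag2 Lag3 h1 h2 h3 h4 h5 h6 h7 hs.
move: (e1*e1 + e2*e2) (a1*a1 + a2*a2) (b1*b1 + b2*b2) (a1*e1 + a2*e2) (b1*e1 + b2*e2) (e1*a2 - e2*a1) (e1*b2 - e2*b1) (a1*b1 + a2*b2).
move=> dd rr ss ea eb ca cb M dd0 rr0 ss0 Lag1 Lag2 Lag3 h1 h2 h3 h4 h5 h6 h7 hs.
case: (lerP ss rr) => hrs.
  exact: (Labs dd0 rr0 ss0 Lag1 Lag2 Lag3 h1 h2 h3 h4 h5 h6 hs hrs).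
have L1 : (- eb) ^+ 2 + (- cb) ^+ 2 = ss * dd by rewrite !sqrrN.
have L2 : (- ea) ^+ 2 + (- ca) ^+ 2 = rr * dd by rewrite !sqrrN.
have L3 : M * dd = (- eb) * (- ea) + (- cb) * (- ca) by rewrite !mulrNN Lag3 mulrC [cb * _]mulrC.
have k1 : ss <= ss + dd - 2 * (- eb) by lra.
have k2 : dd <= ss + dd - 2 * (- eb) by lra.
have k3 : dd <= rr + dd + 2 * (- ea) by lra.
have k4 : rr <= rr + dd + 2 * (- ea) by lra.
have k5 : dd <= dd + ss + rr + 2 * (- ea) - 2 * (- eb) - 2 * M by lra.
have k6 : ss <= dd + ss + rr + 2 * (- ea) - 2 * (- eb) - 2 * M by lra.
have ks : 0 < (- cb) * (- ca) by rewrite mulrNN mulrC.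
have := Labs dd0 ss0 rr0 L1 L2 L3 k1 k2 k3 k4 k5 k6 ks (ltW hrs).
by rewrite opprK addrC.
Qed.

Lemma sqrt_le_inv (x y : R) : 0 <= y -> Num.sqrt x <= Num.sqrt y -> x <= y.
Proof. by move=> hy; rewrite ler_sqrt. Qed.

Lemma sos_ge0 (a b : R) : 0 <= a * a + b * b.
Proof. by rewrite addr_ge0 // -expr2 sqr_ge0. Qed.

Lemma Lpts (U V Pp Q : pt R) :
  dist Pp U <= dist Pp V -> dist U V <= dist Pp V -> dist U V <= dist U Q -> dist V Q <= dist U Q ->
  dist U V <= dist Pp Q -> dist Pp U <= dist Pp Q -> dist Q V <= dist Q Pp ->
  same_side U V Pp Q -> 5 * pi / 6 <= angle_rad Pp U V + angle_rad U V Q.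
Proof.
case: U => u1 u2; case: V => v1 v2; case: Pp => p1 p2; case: Q => q1 q2.
rewrite /dist /dot /vsub /same_side /cross /angle_rad /=.
move=> /(sqrt_le_inv (sos_ge0 _ _)) d1 /(sqrt_le_inv (sos_ge0 _ _)) d2
       /(sqrt_le_inv (sos_ge0 _ _)) d3 /(sqrt_le_inv (sos_ge0 _ _)) d4
       /(sqrt_le_inv (sos_ge0 _ _)) d5 /(sqrt_le_inv (sos_ge0 _ _)) d6
       /(sqrt_le_inv (sos_ge0 _ _)) d7 hs.
have E1 : (u1 - v1) * (u1 - v1) + (u2 - v2) * (u2 - v2) = (v1 - u1) * (v1 - u1) + (v2 - u2) * (v2 - u2) by ring.
have E2 : (u1 - v1) * (q1 - v1) + (u2 - v2) * (q2 - v2) = - ((q1 - v1) * (v1 - u1) + (q2 - v2) * (v2 - u2)) by ring.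
rewrite /dist /dot /vsub /=.
rewrite E1 E2 [X in _ + acos (_ / X)]mulrC.
apply: Lvec.
- lra.
- lra.
- lra.
- lra.
- lra.
- lra.
- lra.
  have -> : (v1 - u1) * (q2 - v2) - (v2 - u2) * (q1 - v1) = (v1 - u1) * (q2 - u2) - (v2 - u2) * (q1 - u1) by ring.
  exact: hs.
Qed.

End Vec.

Section G.
Variable n : nat.
Implicit Types G H : rel 'I_n.

Definition Erel (a b : 'I_n) : rel 'I_n :=
  fun i j => ((i == a) && (j == b)) || ((i == b) && (j == a)).

Lemma Erel_sym a b : symmetric (Erel a b).
Proof. by move=> i j; rewrite /Erel; case: (i == a); case: (j == b); case: (i == b); case: (j == a). Qed.

Lemma remove_edge_sym G a b : symmetric G -> symmetric (remove_edge G a b).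
Proof.
move=> Gs i j; rewrite /remove_edge Gs; congr (_ && ~~ _).
by case: (i == a); case: (j == b); case: (i == b); case: (j == a).
Qed.

Lemma remove_edge_simple G a b : simple_graph G -> simple_graph (remove_edge G a b).
Proof.
case=> Gs Gi; split; first exact: remove_edge_sym.
by move=> i; rewrite /remove_edge (negbTE (Gi i)).
Qed.

Lemma remove_connect G a b x y : symmetric G -> connect (remove_edge G a b) a b ->
  connect G x y -> connect (remove_edge G a b) x y.
Proof.
move=> Gs hab; apply: connect_sub => u v Guv.
case E: (((u == a) && (v == b)) || ((u == b) && (v == a))).
  have symR : connect_sym (remove_edge G a b).
    by apply: sym_connect_sym; apply: remove_edge_sym.
  by case/orP: E => /andP [/eqP -> /eqP ->] //; rewrite symR.
by apply: connect1; rewrite /remove_edge Guv E.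
Qed.

Definition ecount G := #|[set x : 'I_n * 'I_n | G x.1 x.2]|.

Lemma ecount_remove G a b : G a b -> (ecount (remove_edge G a b) < ecount G)%N.
Proof.
move=> Gab; apply: proper_card; apply/fintype.properP; split.
  by apply/fintype.subsetP => -[i j]; rewrite !inE /remove_edge /= => /andP [].
exists (a, b); rewrite !inE //= /remove_edge !eqxx /=.
by rewrite andbF.
Qed.

Lemma exists_subtree G : simple_graph G -> connected_graph G ->
  exists T', spanning_tree T' /\ subrel T' G.
Proof.
move: {2}(ecount G) (leqnn (ecount G)) => k.
elim: k G => [|k IH] G hk Gs Gc;
 (case: (boolP [forall a, [forall b, G a b ==> ~~ connect (remove_edge G a b) a b]]) => H;
  [exists G; split => //; split => // a b Gab;
   by move/forallP: H => /(_ a) /forallP /(_ b) /implyP; apply | ]);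
 move/forallPn: H => [a] /forallPn [b]; rewrite negb_imply negbK => /andP [Gab hc];
 have lt := ecount_remove Gab.
  by move: (leq_trans lt hk).
have s1 : simple_graph (remove_edge G a b) by apply: remove_edge_simple.
have c1 : connected_graph (remove_edge G a b).
  move=> i j; apply: remove_connect => //; by [exact: Gs.1 | exact: Gc].
have [T' [sT sub]] := IH (remove_edge G a b) (leq_trans (ltnSE (leq_trans lt hk)) (leqnn k)) s1 c1.
exists T'; split => // i j /sub; rewrite /remove_edge => /andP [] //.
Qed.

End G.

Section TL.
Variable R : realType.
Variable n : nat.
Variable P : 'I_n -> pt R.
Implicit Types G H : rel 'I_n.

Lemma dist_ge0 (a b : pt R) : 0 <= dist a b.
Proof. exact: sqrtr_ge0. Qed.

Lemma dist_sym (a b : pt R) : dist a b = dist b a.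
Proof. by rewrite /dist /dot /vsub /=; congr (Num.sqrt _); ring. Qed.

Lemma tl_ext G1 G2 : G1 =2 G2 -> tree_length P G1 = tree_length P G2.
Proof. by move=> h; apply: eq_bigr => i _; apply: eq_bigl => j; rewrite h. Qed.

Lemma tl_mono G1 G2 : subrel G1 G2 -> tree_length P G1 <= tree_length P G2.
Proof.
move=> h; apply: ler_sum => i _.
rewrite [leLHS]big_mkcond [leRHS]big_mkcond /=; apply: ler_sum => j _.
case: ifP => h1; case: ifP => h2 //.
- by move/andP: h1 h2 => [-> /h ->].
- exact: dist_ge0.
Qed.

Lemma tl_split G H : tree_length P G =
  tree_length P (fun i j => G i j && H i j) + tree_length P (fun i j => G i j && ~~ H i j).
Proof.
rewrite /tree_length -big_split /=; apply: eq_bigr => i _.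
rewrite big_mkcond [X in _ = X + _]big_mkcond [X in _ = _ + X]big_mkcond -big_split /=.
apply: eq_bigr => j _.
by case: (i < j)%N; case: (G i j); case: (H i j) => /=; rewrite ?addr0 ?add0r.
Qed.

Lemma tl_union G H : tree_length P (fun i j => G i j || H i j) <= tree_length P G + tree_length P H.
Proof.
rewrite /tree_length -big_split /=; apply: ler_sum => i _.
rewrite big_mkcond [X in _ <= X + _]big_mkcond [X in _ <= _ + X]big_mkcond -big_split /=.
apply: ler_sum => j _.
case: (i < j)%N; case: (G i j); case: (H i j) => /=; rewrite ?addr0 ?add0r //.
by rewrite lerDl dist_ge0.
Qed.

Lemma tl_edge x y : x != y -> tree_length P (Erel x y) = dist (P x) (P y).
Proof.
wlog: x y / (x < y)%N.
  move=> Hw xy; case: (ltngtP x y) => h; first exact: Hw.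
    rewrite (tl_ext (G2 := Erel y x)); last by move=> i j; rewrite /Erel orbC.
    by rewrite Hw // 1?eq_sym // dist_sym.
  by move: xy; rewrite (val_inj h) eqxx.
move=> h xy.
rewrite /tree_length (bigD1 x) //= [X in _ + X]big1 ?addr0; last first.
  move=> i hix; apply: big_pred0 => j; apply/negbTE; apply/negP.
  move=> /andP [hij /orP [/andP [/eqP hi _] | /andP [/eqP hi /eqP hj]]].
    by move: hix; rewrite hi eqxx.
  by rewrite hi hj in hij; move: (ltn_trans h hij); rewrite ltnn.
rewrite (big_pred1 y) // => j; rewrite /Erel eqxx (negbTE xy) /= ?andbF ?orbF.
by case: eqP => [->|] /=; rewrite ?h ?andbF.
Qed.

Lemma exchange T x y z w : EMST P T -> T x y -> z != w ->
  connect (remove_edge T x y) x z -> connect (remove_edge T x y) y w ->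
  dist (P x) (P y) <= dist (P z) (P w).
Proof.
move=> [[[Ts Ti] Tc Ta] Tmin] Txy zw cxz cyw.
have xy : x != y by apply/eqP => h; move: (Ti x); rewrite {2}h Txy.
pose G' := remove_edge T x y.
pose G'' := fun i j => G' i j || Erel z w i j.
have sG' : symmetric G' by apply: remove_edge_sym.
have sG'' : symmetric G'' by move=> i j; rewrite /G'' sG' Erel_sym.
have simp : simple_graph G''.
  split => // i; rewrite /G'' /G' /remove_edge (negbTE (Ti i)) /= /Erel.
  apply/negP => /orP [] /andP [/eqP h1 /eqP h2]; move: zw; by rewrite -h1 -h2 eqxx.
have sub' : forall i j, connect G' i j -> connect G'' i j.
  by apply: connect_sub => i j h; apply: connect1; rewrite /G'' h.
have czw : connect G'' z w by apply: connect1; rewrite /G'' /Erel !eqxx orbT.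
have csym : connect_sym G'' by apply: sym_connect_sym.
have cxy : connect G'' x y.
  apply: (connect_trans (sub' _ _ cxz)); apply: (connect_trans czw).
  by rewrite csym; apply: sub'.
have conn : connected_graph G''.
  move=> i j; apply: (connect_sub _ (Tc i j)) => u v Tuv.
  case E: (((u == x) && (v == y)) || ((u == y) && (v == x))).
    by case/orP: E => /andP [/eqP -> /eqP ->] //; rewrite csym.
  by apply: connect1; rewrite /G'' /G' /remove_edge Tuv E.
have [T' [sT sub]] := exists_subtree simp conn.
have h1 := Tmin T' sT.
have h2 := tl_mono sub.
have h3 := @tl_union G' (Erel z w).
rewrite tl_edge // in h3.
have h4 := @tl_split T (Erel x y).
rewrite (tl_ext (G1 := fun i j => T i j && Erel x y i j) (G2 := Erel x y)) in h4; last first.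
  move=> i j; rewrite /Erel; apply/andP/idP => [[] //|h]; split => //.
  by case/orP: h => /andP [/eqP -> /eqP ->] //; rewrite Ts.
rewrite tl_edge // in h4.
have e : tree_length P (fun i j => T i j && ~~ Erel x y i j) = tree_length P G' by [].
rewrite e in h4.
have : tree_length P T <= tree_length P G' + dist (P z) (P w).
  by apply: (le_trans h1); apply: (le_trans h2).
rewrite h4. lra.
Qed.

End TL.

Theorem corollary1 (R : realType) (n : nat) (P : 'I_n -> pt R) (T : rel 'I_n)
  (p u v q : 'I_n) :
  injective P -> EMST P T ->
  T p u -> T u v -> T v q ->
  same_side (P u) (P v) (P p) (P q) ->
  150 <= angle_deg (P p) (P u) (P v) + angle_deg (P u) (P v) (P q).
Proof.
move=> Pinj EM Tpu Tuv Tvq hs.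
have [[[Ts Ti] Tc Ta] _] := EM.
have pv : p != v.
  apply/eqP => E; move: hs; rewrite /same_side E.
  have -> : cross (P u) (P v) (P v) = 0 by rewrite /cross; ring.
  by rewrite mul0r ltxx.
have qu : q != u.
  apply/eqP => E; move: hs; rewrite /same_side E.
  have -> : cross (P u) (P v) (P u) = 0 by rewrite /cross; ring.
  by rewrite mulr0 ltxx.
have pu : p != u by apply/eqP => E; move: Tpu; rewrite E (negbTE (Ti u)).
have uv : u != v by apply/eqP => E; move: Tuv; rewrite E (negbTE (Ti v)).
have vq : v != q by apply/eqP => E; move: Tvq; rewrite E (negbTE (Ti q)).
have Tup : T u p by rewrite Ts.
have Tvu : T v u by rewrite Ts.
have Tqv : T q v by rewrite Ts.
have pu' := negbTE pu. have up' : (u == p) = false by rewrite eq_sym.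
have pv' := negbTE pv. have vp' : (v == p) = false by rewrite eq_sym.
have uv' := negbTE uv. have vu' : (v == u) = false by rewrite eq_sym.
have vq' := negbTE vq. have qv' : (q == v) = false by rewrite eq_sym.
have qu' := negbTE qu. have uq' : (u == q) = false by rewrite eq_sym.
have pq : p != q.
  apply/eqP => E.
  have Tpv : T p v by rewrite Ts E.
  move: (Ta p u Tpu) => /negP; apply.
  apply: (connect_trans (y := v)); apply: connect1.
    by rewrite /remove_edge Tpv ?(pu', up', pv', vp', uv', vu') ?eqxx.
  by rewrite /remove_edge Tvu ?(pu', up', pv', vp', uv', vu') ?eqxx.
have pq' := negbTE pq. have qp' : (q == p) = false by rewrite eq_sym.
have quv : q != u by [].
have uqn : u != q by rewrite eq_sym.
have qpn : q != p by rewrite eq_sym.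
have E1 : dist (P p) (P u) <= dist (P p) (P v).
  apply: (exchange EM Tpu pv (connect0 _ p)); apply: connect1.
  by rewrite /remove_edge Tuv ?(pu', up', pv', vp', uv', vu', vq', qv', qu', uq', pq', qp') ?eqxx.
have E2 : dist (P u) (P v) <= dist (P p) (P v).
  apply: (exchange EM Tuv pv _ (connect0 _ v)); apply: connect1.
  by rewrite /remove_edge Tup ?(pu', up', pv', vp', uv', vu', vq', qv', qu', uq', pq', qp') ?eqxx.
have E3 : dist (P u) (P v) <= dist (P u) (P q).
  apply: (exchange EM Tuv uqn (connect0 _ u)); apply: connect1.
  by rewrite /remove_edge Tvq ?(pu', up', pv', vp', uv', vu', vq', qv', qu', uq', pq', qp') ?eqxx.
have E4 : dist (P v) (P q) <= dist (P u) (P q).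
  apply: (exchange EM Tvq uqn _ (connect0 _ q)); apply: connect1.
  by rewrite /remove_edge Tvu ?(pu', up', pv', vp', uv', vu', vq', qv', qu', uq', pq', qp') ?eqxx.
have E5 : dist (P u) (P v) <= dist (P p) (P q).
  apply: (exchange EM Tuv pq); apply: connect1.
    by rewrite /remove_edge Tup ?(pu', up', pv', vp', uv', vu', vq', qv', qu', uq', pq', qp') ?eqxx.
  by rewrite /remove_edge Tvq ?(pu', up', pv', vp', uv', vu', vq', qv', qu', uq', pq', qp') ?eqxx.
have E6 : dist (P p) (P u) <= dist (P p) (P q).
  apply: (exchange EM Tpu pq (connect0 _ p)).
  apply: (connect_trans (y := v)); apply: connect1.
    by rewrite /remove_edge Tuv ?(pu', up', pv', vp', uv', vu', vq', qv', qu', uq', pq', qp') ?eqxx.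
  by rewrite /remove_edge Tvq ?(pu', up', pv', vp', uv', vu', vq', qv', qu', uq', pq', qp') ?eqxx.
have E7 : dist (P q) (P v) <= dist (P q) (P p).
  apply: (exchange EM Tqv qpn (connect0 _ q)).
  apply: (connect_trans (y := u)); apply: connect1.
    by rewrite /remove_edge Tvu ?(pu', up', pv', vp', uv', vu', vq', qv', qu', uq', pq', qp') ?eqxx.
  by rewrite /remove_edge Tup ?(pu', up', pv', vp', uv', vu', vq', qv', qu', uq', pq', qp') ?eqxx.
have H := Lpts E1 E2 E3 E4 E5 E6 E7 hs.
rewrite /angle_deg.
have p0 := @pi_gt0 R.
have -> : angle_rad (P p) (P u) (P v) * 180 / pi + angle_rad (P u) (P v) (P q) * 180 / pi
  = (angle_rad (P p) (P u) (P v) + angle_rad (P u) (P v) (P q)) * 180 / pi by field; lra.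
rewrite ler_pdivlMr //.
have : 5 * pi / 6 * 180 <= (angle_rad (P p) (P u) (P v) + angle_rad (P u) (P v) (P q)) * 180.
  by rewrite ler_pM2r.
lra.
Qed.
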